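(* Let $M\in\bar{\mathcal{O}}$ be indecomposable. Then every $\varphi\in\operatorname{End}_{\bar{\mathcal{O}}}(M)$ is either an automorphism or locally nilpotent (i.e. for every $v\in M$ there is $k\ge0$ with $\varphi^k(v)=0$).
   Context: $\mathbb{K}$ is an algebraically closed field of characteristic $0$. $\mathfrak{g}=\bigcup_{n\ge1}\mathfrak{g}_n$ is a root-reductive Lie algebra (nested finite-dimensional reductive Lie algebras with nested Cartan subalgebras, each inclusion $\mathfrak{g}_n\hookrightarrow\mathfrak{g}_{n+1}$ a root inclusion). $\mathfrak{h}$ is a splitting maximal toral subalgebra ($\mathfrak{h}\cap\mathfrak{g}_n$ maximal toral in $\mathfrak{g}_n$, $\mathfrak{g}=\mathfrak{h}\oplus\bigoplus_{\alpha\in\Delta}\mathfrak{g}^\alpha$). $\mathfrak{b}=\mathfrak{h}\oplus\mathfrak{n}$, $\mathfrak{n}=\bigoplus_{\alpha\in\Delta^+}\mathfrak{g}^\alpha$, is a splitting Borel subalgebra given by positive roots $\Delta^+$, assumed Dynkin (generated by $\mathfrak{h}$ and the simple root spaces). $\bar{\mathcal{O}}$ is the full subcategory of $\mathfrak{g}$-modules that are $\mathfrak{h}$-weight modules with finite-dimensional weight spaces and are locally $\mathfrak{n}$-finite. *)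

(* Defs.v *)
From HB Require Import structures.
From mathcomp Require Import all_boot all_order all_algebra.
Set Implicit Arguments. Unset Strict Implicit. Unset Printing Implicit Defensive.
Import Order.TTheory GRing.Theory Num.Theory.
Local Open Scope ring_scope.

Section LinAlg.
Variables (K : fieldType) (V : lmodType K).

Definition span_seq (s : seq V) (v : V) : Prop :=
  exists c : seq K, v = \sum_(i < size s) c`_i *: s`_i.

Definition in_span (A : V -> Prop) (v : V) : Prop :=
  exists s : seq V, (forall i : 'I_(size s), A s`_i) /\ span_seq s v.

Definition subspace (S : V -> Prop) : Prop :=
  S 0 /\ forall (a : K) x y, S x -> S y -> S (a *: x + y).

Definition fin_dim (S : V -> Prop) : Prop :=
  subspace S /\ exists s : seq V, (forall i : 'I_(size s), S s`_i) /\
    forall v, S v -> span_seq s v.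

Definition linear_map (f : V -> V) : Prop :=
  forall (a : K) u v, f (a *: u + v) = a *: f u + f v.
End LinAlg.

Section Lie.
Variables (K : fieldType) (g : lmodType K) (br : g -> g -> g).

Definition is_lie_bracket : Prop :=
  (forall (a : K) x y z, br (a *: x + y) z = a *: br x z + br y z) /\
  (forall (a : K) x y z, br z (a *: x + y) = a *: br z x + br z y) /\
  (forall x, br x x = 0) /\
  (forall x y z, br x (br y z) + br y (br z x) + br z (br x y) = 0).

Definition subalg (S : g -> Prop) : Prop :=
  subspace S /\ forall x y, S x -> S y -> S (br x y).

Definition gen_subalg (A : g -> Prop) (x : g) : Prop :=
  forall S, subalg S -> (forall y, A y -> S y) -> S x.

Definition derived (S : g -> Prop) : g -> Prop :=
  in_span (fun z => exists x y, S x /\ S y /\ z = br x y).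

Definition solvable (S : g -> Prop) : Prop :=
  exists k, forall x, iter k derived S x -> x = 0.

Definition ideal_of (S I : g -> Prop) : Prop :=
  subspace I /\ (forall x, I x -> S x) /\ forall x y, S x -> I y -> I (br x y).

Definition center (S : g -> Prop) (x : g) : Prop :=
  S x /\ forall y, S y -> br x y = 0.

(* reductive (Humphreys 19.1): finite-dimensional with Rad S = Z(S) *)
Definition reductive (S : g -> Prop) : Prop :=
  subalg S /\ fin_dim S /\
  forall I, ideal_of S I -> solvable I -> forall x, I x -> center S x.

Definition ad_semisimple_on (S : g -> Prop) (x : g) : Prop :=
  forall v, S v -> in_span (fun w => S w /\ exists c : K, br x w = c *: w) v.

Definition toral_in (S T : g -> Prop) : Prop :=
  subalg T /\ (forall x, T x -> S x) /\ forall x, T x -> ad_semisimple_on S x.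

Definition max_toral_in (S T : g -> Prop) : Prop :=
  toral_in S T /\ forall T', toral_in S T' -> (forall x, T x -> T' x) ->
    forall x, T' x -> T x.

(* root space of S w.r.t. H for the functional alpha (only its values on H matter) *)
Definition root_space (S H : g -> Prop) (alpha : g -> K) (x : g) : Prop :=
  S x /\ forall y, H y -> br y x = alpha y *: x.

Definition is_root (S H : g -> Prop) (alpha : g -> K) : Prop :=
  (exists y, H y /\ alpha y != 0) /\ exists x, x != 0 /\ root_space S H alpha x.

Definition agree_on (H : g -> Prop) (a b : g -> K) : Prop :=
  forall y, H y -> a y = b y.

Definition setT_g : g -> Prop := fun _ => True.

(* g = \bigcup g_n, g_n finite-dim reductive, nested Cartan (= maximal toral)
   subalgebras h_n, each inclusion g_n -> g_{n+1} a root inclusion *)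
Definition root_reductive (gn hn : nat -> g -> Prop) : Prop :=
  (forall n, reductive (gn n)) /\
  (forall n x, gn n x -> gn n.+1 x) /\
  (forall x, exists n, gn n x) /\
  (forall n, max_toral_in (gn n) (hn n)) /\
  (forall n x, hn n x -> hn n.+1 x) /\
  (forall n alpha, is_root (gn n) (hn n) alpha ->
     exists beta, is_root (gn n.+1) (hn n.+1) beta /\
       forall x, root_space (gn n) (hn n) alpha x ->
                 root_space (gn n.+1) (hn n.+1) beta x).

Definition splitting_max_toral (gn : nat -> g -> Prop) (h : g -> Prop) : Prop :=
  max_toral_in setT_g h /\
  (forall n, max_toral_in (gn n) (fun x => h x /\ gn n x)) /\
  (forall x, in_span (fun y => h y \/
       exists alpha, is_root setT_g h alpha /\ root_space setT_g h alpha y) x).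

(* Delta^+ : a positive system of roots (Delta = Delta^+ disjoint-union -Delta^+,
   closed under addition); predicates on functionals, compatible with
   agreement on h *)
Definition positive_system (h : g -> Prop) (pos : (g -> K) -> Prop) : Prop :=
  (forall a, pos a -> is_root setT_g h a) /\
  (forall a b, agree_on h a b -> pos a -> pos b) /\
  (forall a, is_root setT_g h a -> pos a \/ pos (fun x => - a x)) /\
  (forall a, pos a -> ~ pos (fun x => - a x)) /\
  (forall a b, pos a -> pos b -> is_root setT_g h (fun x => a x + b x) ->
     pos (fun x => a x + b x)).

Definition nil_part (h : g -> Prop) (pos : (g -> K) -> Prop) : g -> Prop :=
  in_span (fun y => exists a, pos a /\ root_space setT_g h a y).

Definition borel (h : g -> Prop) (pos : (g -> K) -> Prop) (x : g) : Prop :=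
  exists y z, h y /\ nil_part h pos z /\ x = y + z.

Definition simple_root (h : g -> Prop) (pos : (g -> K) -> Prop) (a : g -> K) : Prop :=
  pos a /\ ~ (exists b c, pos b /\ pos c /\ agree_on h a (fun x => b x + c x)).

Definition dynkin (h : g -> Prop) (pos : (g -> K) -> Prop) : Prop :=
  forall x, borel h pos x <->
    gen_subalg (fun y => h y \/ exists a, simple_root h pos a /\ root_space setT_g h a y) x.

Section Modules.
Variables (M : lmodType K) (act : g -> M -> M).

Definition is_gmodule : Prop :=
  (forall (a : K) x y m, act (a *: x + y) m = a *: act x m + act y m) /\
  (forall (a : K) x m m', act x (a *: m + m') = a *: act x m + act x m') /\
  (forall x y m, act (br x y) m = act x (act y m) - act y (act x m)).

Definition weight_space (h : g -> Prop) (lam : g -> K) (m : M) : Prop :=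
  forall x, h x -> act x m = lam x *: m.

Definition in_Obar (h : g -> Prop) (pos : (g -> K) -> Prop) : Prop :=
  is_gmodule /\
  (forall m, in_span (fun w => exists lam, weight_space h lam w) m) /\
  (forall lam, fin_dim (weight_space h lam)) /\
  (forall m, exists W, fin_dim W /\ W m /\
      forall x w, nil_part h pos x -> W w -> W (act x w)).

Definition submodule (U : M -> Prop) : Prop :=
  subspace U /\ forall x m, U m -> U (act x m).

Definition indecomposable : Prop :=
  (exists m : M, m != 0) /\
  forall U V, submodule U -> submodule V ->
    (forall m, U m -> V m -> m = 0) ->
    (forall m, exists u v, U u /\ V v /\ m = u + v) ->
    (forall m, U m -> m = 0) \/ (forall m, V m -> m = 0).

Definition gmod_endo (phi : M -> M) : Prop :=
  linear_map phi /\ forall x m, phi (act x m) = act x (phi m).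

Definition automorphism (phi : M -> M) : Prop :=
  exists psi, gmod_endo psi /\ (forall m, psi (phi m) = m) /\ (forall m, phi (psi m) = m).

Definition locally_nilpotent (phi : M -> M) : Prop :=
  forall v, exists k, iter k phi v = 0.
End Modules.
End Lie.

(* Main.v *)
Require Import Defs.
From HB Require Import structures.
From mathcomp Require Import all_boot all_order all_algebra.
From Stdlib Require Import IndefiniteDescription.
Set Implicit Arguments. Unset Strict Implicit. Unset Printing Implicit Defensive.
Import Order.TTheory GRing.Theory Num.Theory.
Local Open Scope ring_scope.

Section Lin.
Variables (K : fieldType) (M : lmodType K).

Lemma lin0 (f : M -> M) : linear_map f -> f 0 = 0.
Proof.
move=> Hf; have := Hf 1 0 0; rewrite scale1r addr0 => H.
by apply: (@addrI _ (f 0)); rewrite addr0 {3}H scale1r.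
Qed.

Lemma linD (f : M -> M) : linear_map f -> forall u v, f (u + v) = f u + f v.
Proof. by move=> Hf u v; rewrite -[u]scale1r Hf !scale1r. Qed.

Lemma linZ (f : M -> M) : linear_map f -> forall a u, f (a *: u) = a *: f u.
Proof. by move=> Hf a u; rewrite -[a *: u]addr0 Hf (lin0 Hf) addr0. Qed.

Lemma lin_sum (f : M -> M) : linear_map f -> forall n (F : 'I_n -> M),
  f (\sum_(i < n) F i) = \sum_(i < n) f (F i).
Proof. by move=> Hf n F; apply: (big_morph f (linD Hf) (lin0 Hf)). Qed.

Lemma lin_iter (f : M -> M) : linear_map f -> forall k, linear_map (iter k f).
Proof.
move=> Hf; elim=> [|k IH] a u v //=.
by rewrite IH Hf.
Qed.

Lemma lin_comp (f g : M -> M) : linear_map f -> linear_map g -> linear_map (f \o g).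
Proof. by move=> Hf Hg a u v /=; rewrite Hg Hf. Qed.

Variables (phi : M -> M) (Hphi : linear_map phi).

Definition peval (p : {poly K}) (m : M) : M :=
  \sum_(i < size p) p`_i *: iter i phi m.

Lemma peval_widen (p : {poly K}) (m : M) (n : nat) : (size p <= n)%N ->
  peval p m = \sum_(i < n) p`_i *: iter i phi m.
Proof.
move=> Hn; rewrite /peval (big_ord_widen _ (fun i => p`_i *: iter i phi m) Hn).
rewrite big_mkcond /=; apply: eq_bigr => i _.
case: ifP => // /negbT; rewrite -leqNgt => Hi.
by rewrite nth_default // scale0r.
Qed.

Lemma peval0 m : peval 0 m = 0.
Proof. by rewrite /peval size_poly0 big_ord0. Qed.

Lemma pevalD p q m : peval (p + q) m = peval p m + peval q m.
Proof.
set n := maxn (size p) (size q).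
rewrite (@peval_widen (p + q) m n) ?size_polyD //.
rewrite (@peval_widen p m n) ?leq_maxl // (@peval_widen q m n) ?leq_maxr //.
rewrite -big_split /=; apply: eq_bigr => i _.
by rewrite coefD scalerDl.
Qed.

Lemma pevalZ a p m : peval (a *: p) m = a *: peval p m.
Proof.
rewrite (@peval_widen (a *: p) m (size p)) ?size_scale_leq //.
rewrite /peval scaler_sumr; apply: eq_bigr => i _.
by rewrite coefZ scalerA.
Qed.

Lemma pevalC c m : peval c%:P m = c *: m.
Proof.
rewrite (@peval_widen _ m 1) ?size_polyC_leq1 //.
by rewrite big_ord1 coefC /=.
Qed.

Lemma peval_mulX p m : peval (p * 'X) m = peval p (phi m).
Proof.
rewrite (@peval_widen _ m (size p).+1); last first.
  apply: leq_trans (size_polyMleq _ _) _; rewrite size_polyX addn2 //.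
rewrite big_ord_recl coefMX /= scale0r add0r /peval.
apply: eq_bigr => i _; rewrite coefMX /=.
by rewrite -iterSr.
Qed.

Lemma peval_lin p : linear_map (peval p).
Proof.
move=> a u v; rewrite /peval scaler_sumr -big_split /=.
apply: eq_bigr => i _.
by rewrite (lin_iter Hphi) scalerDr !scalerA mulrC.
Qed.

Lemma peval_comm (f : M -> M) : linear_map f -> (forall m, f (phi m) = phi (f m)) ->
  forall p m, f (peval p m) = peval p (f m).
Proof.
move=> Hf Hc p m; rewrite /peval (lin_sum Hf); apply: eq_bigr => i _.
rewrite (linZ Hf); congr (_ *: _).
by elim: (nat_of_ord i) => //= k <-.
Qed.

Lemma pevalM p q m : peval (p * q) m = peval p (peval q m).
Proof.
elim/poly_ind: p m => [|p c IH] m; first by rewrite mul0r !peval0.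
rewrite mulrDl mulrAC mul_polyC pevalD pevalZ peval_mulX IH.
rewrite pevalD peval_mulX pevalC.
by rewrite (peval_comm Hphi).
Qed.

End Lin.

Section Dep.
Variables (K : fieldType) (M : lmodType K).

Lemma dep (s : seq M) (v : nat -> M) (Hv : forall j, span_seq s (v j)) :
  exists c : 'I_(size s).+1 -> K, (exists j, c j != 0) /\
    \sum_(j < (size s).+1) c j *: v j = 0.
Proof.
set n := size s.
pose C j := proj1_sig (constructive_indefinite_description _ (Hv j)).
have HC j : v j = \sum_(i < n) (C j)`_i *: s`_i.
  exact: (proj2_sig (constructive_indefinite_description _ (Hv j))).
pose B : 'M[K]_(n.+1, n) := \matrix_(j, i) (C j)`_i.
have Hrk : (0 < \rank (kermx B))%N.
  by rewrite mxrank_ker subn_gt0 ltnS rank_leq_col.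
have [i Hi] : exists i, row i (kermx B) != 0.
  apply/existsP; apply: contraLR Hrk; rewrite negb_exists => /forallP H.
  have -> : kermx B = 0.
    by apply/row_matrixP => i; rewrite row0; apply/eqP; have := H i; rewrite negbK.
  by rewrite mxrank0.
set x := row i (kermx B).
have Hx : x *m B = 0 by rewrite /x -row_mul mulmx_ker row0.
exists (fun j => x 0 j); split.
  apply/existsP; apply: contraNT Hi; rewrite negb_exists => /forallP H.
  apply/eqP/rowP => j; have := H j; rewrite negbK => /eqP ->; by rewrite mxE.
rewrite (eq_bigr (fun j : 'I_n.+1 => \sum_(k < n) (x 0 j * (C j)`_k) *: s`_k)); last first.
  by move=> j _; rewrite HC scaler_sumr; apply: eq_bigr => k _; rewrite scalerA.
rewrite exchange_big /=; apply: big1 => k _.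
have := congr1 (fun A : 'M_(1, n) => A 0 k) Hx; rewrite /= !mxE => E.
have E' : \sum_(j < n.+1) x 0 j * (C j)`_k = 0.
  by apply: etrans E; apply: eq_bigr => j _; rewrite !mxE.
by rewrite -scaler_suml E' scale0r.
Qed.

Variables (phi : M -> M) (Hphi : linear_map phi).

Lemma ann (s : seq M) (S : M -> Prop) (HS : forall v, S v -> span_seq s v)
  (m : M) (Hm : forall k, S (iter k phi m)) :
  exists p : {poly K}, p != 0 /\ peval phi p m = 0.
Proof.
have [c [[j0 Hj0] Hc]] := dep (fun k => HS _ (Hm k)).
set n := (size s).+1 in c j0 Hj0 Hc *.
exists (\poly_(j < n) c (inord j)); split.
  apply: contraNneq Hj0 => E.
  have := congr1 (fun p : {poly K} => p`_j0) E; rewrite /= coef_poly ltn_ord coef0.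
  by rewrite inord_val => ->.
rewrite (@peval_widen _ _ phi _ m n) ?size_poly // -[RHS]Hc.
apply: eq_bigr => j _; by rewrite coef_poly ltn_ord inord_val.
Qed.

End Dep.

Section Poly.
Variable K : fieldType.

Lemma bezX (q : {poly K}) k : q`_0 != 0 ->
  exists u v c, c != 0 /\ u * q + v * 'X^k = c%:P.
Proof.
move=> Hq.
have Hc : coprimep q ('X^k).
  apply: coprimep_expr.
  have := coprimep_XsubC q 0; rewrite polyC0 subr0 => ->.
  by rewrite /root horner_coef0.
have /Bezout_coprimepP [[u v] /= Huv] := Hc.
have /eqpf_eq [c Hc0 E] := Huv.
by exists u, v, c; split => //; rewrite E -alg_polyC.
Qed.

Lemma splitX (p : {poly K}) : p != 0 ->
  exists (q : {poly K}) (k : nat), q`_0 != 0 /\ p = q * 'X^k.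
Proof.
move=> Hp; have [k [q Hq E]] := multiplicity_XsubC p 0.
exists q, k; split; last by rewrite E polyC0 subr0.
by move: Hq; rewrite Hp /= /root horner_coef0.
Qed.
End Poly.

Section Ev.
Variables (K : fieldType) (M : lmodType K) (phi : M -> M) (Hphi : linear_map phi).

Lemma pevalXn k m : peval phi 'X^k m = iter k phi m.
Proof.
elim: k m => [|k IH] m; first by rewrite expr0 -[1]/(1%:P) pevalC scale1r.
by rewrite exprSr peval_mulX IH -iterSr.
Qed.

Lemma iter_comm (f : M -> M) : (forall m, f (phi m) = phi (f m)) ->
  forall k m, f (iter k phi m) = iter k phi (f m).
Proof. by move=> Hc; elim=> //= k IH m; rewrite Hc IH. Qed.

Lemma peval_ann p q m : peval phi q m = 0 -> peval phi (p * q) m = 0.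
Proof. by move=> H; rewrite (pevalM Hphi) H (lin0 (peval_lin Hphi p)). Qed.

Lemma peval_ann' p q m : peval phi q m = 0 -> peval phi (q * p) m = 0.
Proof. by rewrite mulrC; apply: peval_ann. Qed.

Lemma ann_closed a u v :
  (exists p : {poly K}, p != 0 /\ peval phi p u = 0) ->
  (exists p : {poly K}, p != 0 /\ peval phi p v = 0) ->
  exists p : {poly K}, p != 0 /\ peval phi p (a *: u + v) = 0.
Proof.
move=> [p1 [H1 E1]] [p2 [H2 E2]]; exists (p1 * p2); split.
  by rewrite mulf_neq0.
by rewrite (peval_lin Hphi) peval_ann' // peval_ann // scaler0 add0r.
Qed.
End Ev.

Theorem mainTheorem8 (K : closedFieldType) (charK0 : [pchar K] =i pred0)
  (g : lmodType K) (br : g -> g -> g) (Hlie : is_lie_bracket br)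
  (gn hn : nat -> g -> Prop) (Hrr : root_reductive br gn hn)
  (h : g -> Prop) (Hh : splitting_max_toral br gn h)
  (pos : (g -> K) -> Prop) (Hpos : positive_system br h pos)
  (Hdyn : dynkin br h pos)
  (M : lmodType K) (act : g -> M -> M) (HM : in_Obar br act h pos)
  (Hind : indecomposable act)
  (phi : M -> M) (Hphi : gmod_endo act phi) :
  automorphism act phi \/ locally_nilpotent phi.
Proof.
case: HM => [[_ [HactL _]] [Hwt [Hfd _]]].
case: Hphi => [Hlin Hcomm].
have Hact x : linear_map (act x) by move=> a u v; apply: HactL.
have HcommR x m : act x (phi m) = phi (act x m) by rewrite Hcomm.
have Hw lam w : weight_space act h lam w -> weight_space act h lam (phi w).
  by move=> Hw x Hx; rewrite HcommR Hw // (linZ Hlin).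
have Hwk lam w k : weight_space act h lam w -> weight_space act h lam (iter k phi w).
  by move=> Hw0; elim: k => //= k IH; apply: Hw.
have Hann m : exists p : {poly K}, p != 0 /\ peval phi p m = 0.
  have [s [Hs [c ->]]] := Hwt m.
  apply: (big_ind (fun v => exists p : {poly K}, p != 0 /\ peval phi p v = 0)).
  - by exists 1; split; [exact: oner_neq0 | exact: (lin0 (peval_lin Hlin 1))].
  - move=> u v Hu Hv; rewrite -[u]scale1r; exact: (ann_closed Hlin).
  - move=> i _; rewrite -[_ *: _]addr0; apply: (ann_closed Hlin).
      have [lam Hlam] := Hs i.
      have [_ [t [_ Ht]]] := Hfd lam.
      by apply: (ann (phi:=phi) Ht) => k; apply: Hwk.
    by exists 1; split; [exact: oner_neq0 | exact: (lin0 (peval_lin Hlin 1))].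
pose M0 m := exists k, iter k phi m = 0.
pose M1 m := exists q : {poly K}, q`_0 != 0 /\ peval phi q m = 0.
have HM0 : submodule act M0.
  split; first split.
  - by exists 0%N.
  - move=> a u v [k1 E1] [k2 E2]; exists (k1 + k2)%N.
    rewrite (lin_iter Hlin) {1}addnC !iterD E1 E2.
    by rewrite !(lin0 (lin_iter Hlin _)) scaler0 addr0.
  - move=> x m [k E]; exists k.
    by rewrite -(iter_comm (f := act x)) // E (lin0 (Hact x)).
have HM1 : submodule act M1.
  split; first split.
  - by exists 1; split; [rewrite coef1 oner_neq0 | exact: (lin0 (peval_lin Hlin 1))].
  - move=> a u v [q1 [H1 E1]] [q2 [H2 E2]]; exists (q1 * q2); split.
      by rewrite coef0M mulf_neq0.
    by rewrite (peval_lin Hlin) (peval_ann' Hlin) // (peval_ann Hlin) // scaler0 add0r.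
  - move=> x m [q [Hq E]]; exists q; split => //.
    by rewrite -(peval_comm (Hact x) (HcommR x)) E (lin0 (Hact x)).
have Hdisj m : M0 m -> M1 m -> m = 0.
  move=> [k Ek] [q [Hq Eq]].
  have [u [v [c [Hc E]]]] := bezX k Hq.
  have := pevalC phi c m; rewrite -E pevalD (pevalM Hlin) (pevalM Hlin) Eq pevalXn Ek.
  rewrite !(lin0 (peval_lin Hlin _)) addr0 => /esym /eqP.
  by rewrite scaler_eq0 (negbTE Hc) => /eqP.
have Hsum m : exists u v, M0 u /\ M1 v /\ m = u + v.
  have [p [Hp Ep]] := Hann m.
  have [q [k [Hq Epq]]] := splitX Hp.
  have [u [v [c [Hc E]]]] := bezX k Hq.
  exists (c^-1 *: peval phi (u * q) m), (c^-1 *: peval phi (v * 'X^k) m).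
  split; last split.
  - exists k; rewrite -pevalXn (linZ (peval_lin Hlin _)) -(pevalM Hlin).
    rewrite (_ : 'X^k * (u * q) = u * p); last by rewrite Epq mulrCA [q * _]mulrC.
    by rewrite (peval_ann Hlin) // scaler0.
  - exists q; split => //.
    rewrite (linZ (peval_lin Hlin _)) -(pevalM Hlin).
    rewrite (_ : q * (v * 'X^k) = v * p); last by rewrite Epq mulrCA.
    by rewrite (peval_ann Hlin) // scaler0.
  - by rewrite -scalerDr -pevalD E pevalC scalerA mulVf // scale1r.
case: Hind => _ /(_ M0 M1 HM0 HM1 Hdisj Hsum) [H0|H1]; last first.
  right => m; have [u [v [Hu [Hv ->]]]] := Hsum m.
  by rewrite (H1 v Hv) addr0; case: Hu => k Ek; exists k.
left.
have Hinj a b : phi a = phi b -> a = b.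
  move=> E; apply/eqP; rewrite -subr_eq0; apply/eqP; apply: H0; exists 1%N => /=.
  by rewrite -scaleN1r addrC Hlin E scaleN1r addNr.
have Hsurj m : exists a, phi a = m.
  have [u [v [Hu [[q [Hq Eq]] E]]]] := Hsum m.
  have Hv : v = m by rewrite E (H0 u Hu) add0r.
  have [a [b [c [Hc Eb]]]] := bezX 1 Hq.
  exists (c^-1 *: peval phi b m).
  have := pevalC phi c m; rewrite -Eb pevalD (pevalM Hlin) (pevalM Hlin) -Hv Eq.
  rewrite (lin0 (peval_lin Hlin _)) add0r pevalXn /= Hv => E2.
  by rewrite (linZ Hlin) (peval_comm Hlin (fun _ => erefl)) E2 scalerA mulVf // scale1r.
pose psi m := proj1_sig (constructive_indefinite_description _ (Hsurj m)).
have Hpsi m : phi (psi m) = m.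
  exact: (proj2_sig (constructive_indefinite_description _ (Hsurj m))).
exists psi; split; last split.
- split.
  + by move=> a u v; apply: Hinj; rewrite Hlin !Hpsi.
  + by move=> x m; apply: Hinj; rewrite Hpsi Hcomm Hpsi.
- by move=> m; apply: Hinj; rewrite Hpsi.
- exact: Hpsi.
Qed.
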